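(* Let $u>0$, $\Delta x>0$, and let $\varphi:\mathbb R\to\mathbb R$ satisfy $0\le\varphi(r)\le 1$ for all $r$ (for instance the Minmod limiter $\varphi(r)=\mathrm{minmod}(1,r)$). Let $t\mapsto c(t)=(c_j(t))_{j\in\mathbb Z}$ be a $C^1$ map from an interval $I\subset\mathbb R$ into $\ell^2(\mathbb Z)$ satisfying, for all $t\in I$ and $j\in\mathbb Z$, $$\frac{d}{dt}c_j(t)+u\,\frac{c_{j+\frac12}(t)-c_{j-\frac12}(t)}{\Delta x}=0,\qquad c_{j+\frac12}=c_j+\tfrac12(c_{j+1}-c_j)\,\varphi_{j+\frac12},$$ where $\varphi_{j+\frac12}=\varphi\!\left(\frac{c_j-c_{j-1}}{c_{j+1}-c_j}\right)$ if $c_{j+1}\ne c_j$ and $\varphi_{j+\frac12}$ is an arbitrary number in $[0,1]$ if $c_{j+1}=c_j$. Then for all $t\in I$, $$\frac{\Delta x}{2}\frac{d}{dt}\sum_{j\in\mathbb Z}|c_j(t)|^2=-\frac u2\sum_{j\in\mathbb Z}|c_j(t)-c_{j-1}(t)|^2\bigl(1-\varphi_{j-\frac12}(t)\bigr)\le 0 ,$$ so in particular $t\mapsto\sum_j|c_j(t)|^2$ is non-increasing.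
   Context: The function $\mathrm{minmod}:\mathbb R^2\to\mathbb R$ is defined by $\mathrm{minmod}(a,b)=0$ if $ab\le 0$, $\mathrm{minmod}(a,b)=\min(a,b)$ if $a,b>0$, and $\mathrm{minmod}(a,b)=\max(a,b)$ if $a,b<0$. *)

(* Defs.v *)
From Stdlib Require Import Reals ZArith.
Open Scope R_scope.

(* minmod, as in the paper (for reference; the theorem is about any limiter
   phi with values in [0,1], e.g. phi r = minmod 1 r). *)
Definition minmod (a b : R) : R :=
  if Rle_dec (a * b) 0 then 0
  else if Rlt_dec 0 a then Rmin a b else Rmax a b.

Definition is_interval (I : R -> Prop) : Prop :=
  forall a b x, I a -> I b -> a <= x <= b -> I x.

Definition sum_Z (f : Z -> R) (s : R) : Prop :=
  exists a b : R,
    infinite_sum (fun n : nat => f (Z.of_nat n)) a /\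
    infinite_sum (fun n : nat => f (- Z.of_nat (S n))%Z) b /\
    s = a + b.

Definition in_l2 (x : Z -> R) : Prop :=
  exists S, sum_Z (fun j => (x j) ^ 2) S.

Definition l2_close (x y : Z -> R) (eps : R) : Prop :=
  exists S, sum_Z (fun j => (x j - y j) ^ 2) S /\ S < eps ^ 2.

Definition C1_l2_on (I : R -> Prop) (c dc : R -> Z -> R) : Prop :=
  (forall t, I t -> in_l2 (c t) /\ in_l2 (dc t)) /\
  (forall t, I t -> forall eps, 0 < eps -> exists delta, 0 < delta /\
     forall s, I s -> s <> t -> Rabs (s - t) < delta ->
       l2_close (fun j => (c s j - c t j) / (s - t)) (dc t) eps) /\
  (forall t, I t -> forall eps, 0 < eps -> exists delta, 0 < delta /\
     forall s, I s -> Rabs (s - t) < delta -> l2_close (dc s) (dc t) eps).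

(* the reconstructed interface value c_{j+1/2}, with ph j = phi_{j+1/2} *)
Definition c_half (c : Z -> R) (ph : Z -> R) (j : Z) : R :=
  c j + / 2 * (c (j + 1)%Z - c j) * ph j.

Definition limiter_values (phi : R -> R) (c : Z -> R) (ph : Z -> R) : Prop :=
  forall j : Z,
    (c (j + 1)%Z <> c j ->
       ph j = phi ((c j - c (j - 1)%Z) / (c (j + 1)%Z - c j))) /\
    (c (j + 1)%Z = c j -> 0 <= ph j <= 1).

(* Main.v *)
Require Import Defs.
From Stdlib Require Import Reals ZArith Lra Lia Classical.
From Coquelicot Require Import Coquelicot.
Open Scope R_scope.

Lemma ser_plus a b la lb : infinite_sum a la -> infinite_sum b lb ->
  infinite_sum (fun n => a n + b n) (la + lb).
Proof. intros Ha Hb; apply is_series_Reals.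
  apply (is_series_plus a b); apply is_series_Reals; auto. Qed.

Lemma ser_scal k a la : infinite_sum a la -> infinite_sum (fun n => k * a n) (k * la).
Proof. intros Ha; apply is_series_Reals.
  apply (is_series_scal k a); apply is_series_Reals; auto. Qed.

Lemma ser_ext a b l : (forall n, a n = b n) -> infinite_sum a l -> infinite_sum b l.
Proof. intros H Ha; apply is_series_Reals; apply (is_series_ext a b); auto;
  apply is_series_Reals; auto. Qed.

Lemma ser_uniq a l1 l2 : infinite_sum a l1 -> infinite_sum a l2 -> l1 = l2.
Proof. intros H1 H2. apply is_series_Reals in H1, H2.
  apply is_series_unique in H1, H2. congruence. Qed.

Lemma ser_nonneg a l : (forall n, 0 <= a n) -> infinite_sum a l -> 0 <= l.
Proof. intros H Ha. apply is_series_Reals in Ha.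
  assert (He : ex_series a) by (exists l; auto).
  pose proof (Series_le (fun _ => 0) a) as HL.
  rewrite (is_series_unique _ _ Ha) in HL.
  assert (H0 : is_series (fun _ => 0) 0).
  { apply is_series_Reals. apply (ser_ext (fun n => 0 * a n)).
    intros; ring. assert (Hs := ser_scal 0 a l).
    rewrite Rmult_0_l in Hs. apply Hs. apply is_series_Reals; auto. }
  rewrite (is_series_unique _ _ H0) in HL.
  apply HL; auto. intros n; split; [lra| auto]. Qed.

Lemma ser_cmp a b lb : (forall n, Rabs (a n) <= b n) -> infinite_sum b lb ->
  exists la, infinite_sum a la.
Proof. intros H Hb. apply is_series_Reals in Hb.
  assert (Ha : ex_series a). { apply (ex_series_le a b); auto. exists lb; auto. }
  destruct Ha as [la Ha]. exists la. apply is_series_Reals; auto. Qed.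

Lemma ser_lim0 a l : infinite_sum a l -> Un_cv a 0.
Proof. intros H. apply is_lim_seq_Reals. apply ex_series_lim_0.
  exists l; apply is_series_Reals; auto. Qed.

Lemma sZ_plus f g a b : sum_Z f a -> sum_Z g b -> sum_Z (fun j => f j + g j) (a + b).
Proof. intros [a1 [a2 [H1 [H2 ->]]]] [b1 [b2 [K1 [K2 ->]]]].
  exists (a1+b1), (a2+b2); split; [|split].
  apply (ser_plus (fun n => f (Z.of_nat n)) (fun n => g (Z.of_nat n))); auto.
  apply (ser_plus (fun n => f (- Z.of_nat (S n))%Z) (fun n => g (- Z.of_nat (S n))%Z)); auto.
  ring. Qed.

Lemma sZ_scal k f a : sum_Z f a -> sum_Z (fun j => k * f j) (k * a).
Proof. intros [a1 [a2 [H1 [H2 ->]]]].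
  exists (k*a1), (k*a2); split; [|split].
  apply (ser_scal k (fun n => f (Z.of_nat n))); auto.
  apply (ser_scal k (fun n => f (- Z.of_nat (S n))%Z)); auto.
  ring. Qed.

Lemma sZ_ext f g a : (forall j, f j = g j) -> sum_Z f a -> sum_Z g a.
Proof. intros E [a1 [a2 [H1 [H2 ->]]]].
  exists a1, a2; split; [|split]; auto.
  apply (ser_ext (fun n => f (Z.of_nat n))); auto.
  apply (ser_ext (fun n => f (- Z.of_nat (S n))%Z)); auto. Qed.

Lemma sZ_uniq f a b : sum_Z f a -> sum_Z f b -> a = b.
Proof. intros [a1 [a2 [H1 [H2 ->]]]] [b1 [b2 [K1 [K2 ->]]]].
  rewrite (ser_uniq _ _ _ H1 K1), (ser_uniq _ _ _ H2 K2). auto. Qed.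

Lemma sZ_nonneg f a : (forall j, 0 <= f j) -> sum_Z f a -> 0 <= a.
Proof. intros P [a1 [a2 [H1 [H2 ->]]]].
  pose proof (ser_nonneg _ _ (fun n => P _) H1).
  pose proof (ser_nonneg _ _ (fun n => P _) H2). lra. Qed.

Lemma sZ_le f g a b : (forall j, f j <= g j) -> sum_Z f a -> sum_Z g b -> a <= b.
Proof. intros P Ha Hb.
  assert (H := sZ_plus _ _ _ _ Hb (sZ_scal (-1) _ _ Ha)).
  apply sZ_nonneg in H. lra. intros j; specialize (P j); lra. Qed.

Lemma sZ_cmp f g b : (forall j, Rabs (f j) <= g j) -> sum_Z g b -> exists a, sum_Z f a.
Proof. intros P [b1 [b2 [H1 [H2 ->]]]].
  destruct (ser_cmp (fun n => f (Z.of_nat n)) _ _ (fun n => P _) H1) as [a1 A1].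
  destruct (ser_cmp (fun n => f (- Z.of_nat (S n))%Z) _ _ (fun n => P _) H2) as [a2 A2].
  exists (a1+a2), a1, a2; auto. Qed.

Definition Zlim0 (f : Z -> R) := forall eps, 0 < eps -> exists N, forall n, (N <= n)%nat ->
  Rabs (f (Z.of_nat n)) < eps /\ Rabs (f (- Z.of_nat (S n))%Z) < eps.

Lemma sZ_lim0 f a : sum_Z f a -> Zlim0 f.
Proof. intros [a1 [a2 [H1 [H2 _]]]] eps Heps.
  destruct (ser_lim0 _ _ H1 eps Heps) as [N1 HN1].
  destruct (ser_lim0 _ _ H2 eps Heps) as [N2 HN2].
  exists (Nat.max N1 N2); intros n Hn.
  specialize (HN1 n ltac:(lia)); specialize (HN2 n ltac:(lia)).
  unfold R_dist in *; rewrite Rminus_0_r in *. auto. Qed.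

Lemma Zlim0_shift f : Zlim0 f -> Zlim0 (fun j => f (j + 1)%Z).
Proof. intros H eps Heps. destruct (H eps Heps) as [N HN].
  exists (S N); intros n Hn. destruct n as [|m]; [lia|].
  split.
  - replace (Z.of_nat (S m) + 1)%Z with (Z.of_nat (S (S m))) by lia.
    apply HN; lia.
  - replace (- Z.of_nat (S (S m)) + 1)%Z with (- Z.of_nat (S m))%Z by lia.
    apply HN; lia. Qed.

Lemma Zlim0_bound f g h : Zlim0 f -> Zlim0 g ->
  (forall j, Rabs (h j) <= Rabs (f j) + Rabs (g j)) -> Zlim0 h.
Proof. intros Hf Hg B eps Heps.
  destruct (Hf (eps/2) ltac:(lra)) as [N1 HN1].
  destruct (Hg (eps/2) ltac:(lra)) as [N2 HN2].
  exists (Nat.max N1 N2); intros n Hn.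
  destruct (HN1 n ltac:(lia)); destruct (HN2 n ltac:(lia)).
  pose proof (B (Z.of_nat n)); pose proof (B (- Z.of_nat (S n))%Z). split; lra. Qed.

Lemma sZ_tele T : Zlim0 T -> sum_Z (fun j => T j - T (j - 1)%Z) 0.
Proof. intros H. exists (- T (-1)%Z), (T (-1)%Z); split; [|split]; [| |ring].
  - assert (E : forall N, sum_f_R0 (fun n => T (Z.of_nat n) - T (Z.of_nat n - 1)%Z) N
                = T (Z.of_nat N) - T (-1)%Z).
    { induction N as [|N IH]. reflexivity.
      rewrite tech5, IH. replace (Z.of_nat (S N) - 1)%Z with (Z.of_nat N) by lia. ring. }
    intros eps Heps. destruct (H eps Heps) as [N HN]. exists N; intros n Hn.
    unfold R_dist. rewrite E. replace (T (Z.of_nat n) - T (-1)%Z - - T (-1)%Z)%R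
      with (T (Z.of_nat n)) by ring. apply HN; lia.
  - assert (E : forall N, sum_f_R0 (fun n => T (- Z.of_nat (S n))%Z - T (- Z.of_nat (S n) - 1)%Z) N
                = T (-1)%Z - T (- Z.of_nat (S (S N)))%Z).
    { induction N as [|N IH]. reflexivity.
      rewrite tech5, IH. replace (- Z.of_nat (S (S N)) - 1)%Z with (- Z.of_nat (S (S (S N))))%Z by lia.
      ring. }
    intros eps Heps. destruct (H eps Heps) as [N HN]. exists N; intros n Hn.
    unfold R_dist. rewrite E. replace (T (-1)%Z - T (- Z.of_nat (S (S n)))%Z - T (-1)%Z)
      with (- T (- Z.of_nat (S (S n)))%Z) by ring. rewrite Rabs_Ropp. apply HN; lia. Qed.

Lemma mono_rel (I : R -> Prop) (P : R -> R -> Prop) :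
 is_interval I ->
 (forall x, I x -> exists e, P x e) ->
 (forall x e1 e2, P x e1 -> P x e2 -> e1 = e2) ->
 (forall t, I t -> forall eps, 0 < eps -> exists delta, 0 < delta /\
    forall s, I s -> s <> t -> Rabs (s - t) < delta -> forall Es Et, P s Es -> P t Et ->
      (Es - Et) / (s - t) < eps) ->
 forall a b, I a -> I b -> a <= b -> forall Ea Eb, P a Ea -> P b Eb -> Eb <= Ea.
Proof.
  intros HI Hex Hun Hd a b Ia Ib Hab Ea Eb Pa Pb.
  destruct (Req_dec a b) as [<-|Hne].
  { rewrite (Hun _ _ _ Pa Pb). lra. }
  apply Rnot_lt_le; intro Hlt.
  set (eps := (Eb - Ea) / (2 * (b - a))).
  assert (Heps : 0 < eps). { unfold eps; apply Rdiv_lt_0_compat; lra. }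
  set (A := fun x => a <= x <= b /\ forall e, P x e -> e - Ea <= eps * (x - a)).
  assert (Aa : A a). { split; [lra|]. intros e Pe. rewrite (Hun _ _ _ Pe Pa). lra. }
  assert (Bd : bound A). { exists b; intros x [Hx _]; lra. }
  destruct (completeness A Bd (ex_intro _ a Aa)) as [m [Hub Hlub]].
  assert (Ham : a <= m) by (apply Hub; auto).
  assert (Hmb : m <= b) by (apply Hlub; intros x [Hx _]; lra).
  assert (Im : I m) by (apply (HI a b); auto).
  destruct (Hex m Im) as [em Pm].
  destruct (Hd m Im eps Heps) as [delta [Hdel Hdm]].
  assert (C1 : em - Ea <= eps * (m - a)).
  { destruct (Req_dec m a) as [->|Hma].
    - rewrite (Hun _ _ _ Pm Pa). lra.
    - assert (Hx : exists x, A x /\ m - delta < x).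
      { apply NNPP; intro Hn.
        assert (m <= m - delta); [|lra].
        apply Hlub; intros x Ax. apply Rnot_lt_le; intro.
        apply Hn; exists x; auto. }
      destruct Hx as [x [[Hx Ax] Hxm]].
      assert (x <= m) by (apply Hub; split; auto).
      destruct (Req_dec x m) as [->|Hxm'].
      + apply Ax; auto.
      + assert (Ix : I x) by (apply (HI a b); auto; lra).
        destruct (Hex x Ix) as [ex Px].
        assert (Q := Hdm x Ix Hxm' ltac:(rewrite Rabs_left; lra) ex em Px Pm).
        assert (Ex := Ax ex Px).
        set (q := (ex - em) / (x - m)) in Q.
        assert (ex - em = q * (x - m)) by (unfold q; field; lra).
        nra. }
  assert (Hmb' : m < b).
  { destruct (Req_dec m b) as [->|]; [|lra].
    rewrite (Hun _ _ _ Pm Pb) in C1. unfold eps in C1.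
    assert (Eb - Ea <= (Eb - Ea) / 2) by (replace ((Eb - Ea) / 2) with
      ((Eb - Ea) / (2 * (b - a)) * (b - a)) by (field; lra); lra). lra. }
  set (s := m + Rmin delta (b - m) / 2).
  assert (Hs1 : m < s) by (unfold s; pose proof (Rmin_glb_lt delta (b-m) 0); 
     assert (0 < Rmin delta (b - m)) by (apply Rmin_glb_lt; lra); lra).
  assert (Hs2 : s <= b) by (unfold s; pose proof (Rmin_r delta (b - m)); lra).
  assert (Hs3 : s - m < delta) by (unfold s; pose proof (Rmin_l delta (b - m));
     assert (0 < Rmin delta (b - m)) by (apply Rmin_glb_lt; lra); lra).
  assert (Is : I s) by (apply (HI a b); auto; lra).
  assert (As : A s).
  { split; [lra|]. intros es Ps.
    assert (Q := Hdm s Is ltac:(lra) ltac:(rewrite Rabs_right; lra) es em Ps Pm).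
    set (q := (es - em) / (s - m)) in Q.
    assert (es - em = q * (s - m)) by (unfold q; field; lra).
    nra. }
  assert (s <= m) by (apply Hub; auto). lra.
Qed.

Lemma ab_le a b : Rabs (a * b) <= / 2 * (a ^ 2 + b ^ 2).
Proof. pose proof (pow2_ge_0 (a+b)); pose proof (pow2_ge_0 (a-b)).
  unfold Rabs; destruct Rcase_abs; nra. Qed.

Lemma ab_le_k k a b : 0 < k -> a * b <= / 2 * (k * a ^ 2 + b ^ 2 / k) /\
   - (a * b) <= / 2 * (k * a ^ 2 + b ^ 2 / k).
Proof. intros Hk.
  assert (E : / 2 * (k * a ^ 2 + b ^ 2 / k) = / 2 * ((k * a - b) ^ 2 / k) + a * b) by (field; lra).
  assert (E2 : / 2 * (k * a ^ 2 + b ^ 2 / k) = / 2 * ((k * a + b) ^ 2 / k) - a * b) by (field; lra).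
  assert (0 <= (k * a - b) ^ 2 / k) by (unfold Rdiv; apply Rmult_le_pos; [apply pow2_ge_0| apply Rlt_le, Rinv_0_lt_compat; lra]).
  assert (0 <= (k * a + b) ^ 2 / k) by (unfold Rdiv; apply Rmult_le_pos; [apply pow2_ge_0| apply Rlt_le, Rinv_0_lt_compat; lra]).
  lra. Qed.

Lemma T_bound x y p : 0 <= p <= 1 ->
  Rabs (/ 2 * x ^ 2 + / 2 * x * (y - x) * p) <= Rabs (2 * x ^ 2) + Rabs (y ^ 2).
Proof. intros Hp. rewrite (Rabs_right (2 * x ^ 2)) by nra.
  rewrite (Rabs_right (y ^ 2)) by nra.
  apply Rabs_le. assert (Rabs (x*y) <= /2 * (x^2+y^2)) by apply ab_le.
  revert H; unfold Rabs; destruct Rcase_abs; intros; split; nra. Qed.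

Lemma final_arith dx eps Et Sd Se Sce Sq h k eps1 delta :
  0 < dx -> 0 < eps -> 0 <= Et -> 0 <= Sd -> 0 <= Se ->
  k = (2 * eps / dx) / (4 * (Et + 1)) ->
  eps1 = Rmin 1 ((2 * eps / dx) * k / 4) ->
  Se < eps1 ^ 2 -> Rabs h < delta -> delta <= (2 * eps / dx) / (4 * (Sd + 1)) ->
  Rabs Sce <= / 2 * (k * Et + Se / k) -> 0 <= Sq <= 2 * Sd + 2 * Se ->
  Rabs (dx * Sce + dx / 2 * h * Sq) < eps.
Proof.
  intros Hdx He HEt HSd HSe Hk He1 HSe1 Hh Hdel HSce HSq.
  set (e2 := 2 * eps / dx) in *.
  assert (He2 : 0 < e2) by (unfold e2; apply Rdiv_lt_0_compat; lra).
  assert (Hkp : 0 < k) by (rewrite Hk; apply Rdiv_lt_0_compat; lra).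
  assert (He1p : eps1 <= 1) by (rewrite He1; apply Rmin_l).
  assert (He1q : eps1 <= e2 * k / 4) by (rewrite He1; apply Rmin_r).
  assert (He1n : 0 <= eps1).
  { rewrite He1. apply Rmin_glb; [lra|]. apply Rlt_le, Rdiv_lt_0_compat; [nra|lra]. }
  assert (HSe2 : Se < 1) by nra.
  assert (HSe3 : Se / k < e2 / 4).
  { apply (Rmult_lt_reg_r k); auto. unfold Rdiv. rewrite Rmult_assoc, Rinv_l by lra. nra. }
  assert (HkEt : k * Et < e2 / 4).
  { rewrite Hk. apply (Rmult_lt_reg_r (4 * (Et + 1))); [lra|].
    unfold Rdiv. field_simplify; [|lra]. nra. }
  assert (Hdp : 0 < delta) by (pose proof (Rabs_pos h); lra).
  assert (Hq : delta * (2 * Sd + 2 * Se) <= e2 / 2).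
  { assert (delta * (2 * Sd + 2 * Se) <= delta * (2 * (Sd + 1))) by nra.
    assert (delta * (2 * (Sd + 1)) <= e2 / (4 * (Sd + 1)) * (2 * (Sd + 1))) by nra.
    replace (e2 / (4 * (Sd + 1)) * (2 * (Sd + 1))) with (e2 / 2) in * by (field; lra). lra. }
  assert (Hhs : Rabs (h * Sq) <= e2 / 2).
  { rewrite Rabs_mult, (Rabs_right Sq) by lra. nra. }
  assert (Hsc : Rabs Sce < e2 / 4).
  { lra. }
  eapply Rle_lt_trans; [apply Rabs_triang|].
  rewrite Rabs_mult, (Rabs_right dx) by lra.
  replace (dx / 2 * h * Sq) with (dx / 2 * (h * Sq)) by ring.
  rewrite Rabs_mult, (Rabs_right (dx/2)) by lra.
  assert (dx * e2 = 2 * eps) by (unfold e2; field; lra).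
  nra.
Qed.

Theorem mainTheorem2
  (u dx : R) (phi : R -> R) (I : R -> Prop)
  (c dc : R -> Z -> R) (ph : R -> Z -> R)
  (Hu : 0 < u) (Hdx : 0 < dx)
  (Hphi : forall r, 0 <= phi r <= 1)
  (HI : is_interval I)
  (Hc : C1_l2_on I c dc)
  (Hlim : forall t, I t -> limiter_values phi (c t) (ph t))
  (Hode : forall t, I t -> forall j : Z,
      dc t j + u * (c_half (c t) (ph t) j - c_half (c t) (ph t) (j - 1)%Z) / dx = 0) :
  (forall t, I t ->
     exists D : R,
       sum_Z (fun j => (c t j - c t (j - 1)%Z) ^ 2 * (1 - ph t (j - 1)%Z)) D /\
       (forall eps, 0 < eps -> exists delta, 0 < delta /\
          forall s, I s -> s <> t -> Rabs (s - t) < delta ->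
          forall Es Et,
            sum_Z (fun j => (c s j) ^ 2) Es ->
            sum_Z (fun j => (c t j) ^ 2) Et ->
            Rabs (dx / 2 * ((Es - Et) / (s - t)) - (- (u / 2) * D)) < eps) /\
       - (u / 2) * D <= 0) /\
  (forall s t, I s -> I t -> s <= t ->
     forall Es Et,
       sum_Z (fun j => (c s j) ^ 2) Es ->
       sum_Z (fun j => (c t j) ^ 2) Et ->
       Et <= Es).
Proof.
  destruct Hc as [Hl2 [Hfr _]].
  assert (P1 : forall t, I t ->
     exists D : R,
       sum_Z (fun j => (c t j - c t (j - 1)%Z) ^ 2 * (1 - ph t (j - 1)%Z)) D /\
       (forall eps, 0 < eps -> exists delta, 0 < delta /\
          forall s, I s -> s <> t -> Rabs (s - t) < delta ->
          forall Es Et,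
            sum_Z (fun j => (c s j) ^ 2) Es ->
            sum_Z (fun j => (c t j) ^ 2) Et ->
            Rabs (dx / 2 * ((Es - Et) / (s - t)) - (- (u / 2) * D)) < eps) /\
       - (u / 2) * D <= 0).
  { intros t It.
    destruct (Hl2 t It) as [[Et HEt] [Sd HSd]].
    assert (Hphb : forall j, 0 <= ph t j <= 1).
    { intros j. destruct (Hlim t It j) as [L1 L2].
      destruct (Req_dec (c t (j + 1)%Z) (c t j)); auto. rewrite L1; auto. }
    destruct (sZ_cmp (fun j => c t j * dc t j) (fun j => / 2 * (c t j ^ 2 + dc t j ^ 2))
       (/2 * (Et + Sd)) (fun j => ab_le _ _) (sZ_scal _ _ _ (sZ_plus _ _ _ _ HEt HSd)))
      as [Scd HScd].
    set (T := fun j => / 2 * c t j ^ 2 + / 2 * c t j * (c t (j + 1)%Z - c t j) * ph t j).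
    assert (HT : Zlim0 T).
    { apply (Zlim0_bound (fun j => 2 * c t j ^ 2) (fun j => c t (j + 1)%Z ^ 2)).
      - exact (sZ_lim0 _ _ (sZ_scal 2 _ _ HEt)).
      - exact (Zlim0_shift (fun j => c t j ^ 2) (sZ_lim0 _ _ HEt)).
      - intros j; unfold T; apply T_bound; auto. }
    assert (Hpt : forall j, (c t j - c t (j - 1)%Z) ^ 2 * (1 - ph t (j - 1)%Z) =
       -(2 * dx / u) * (c t j * dc t j) + (-2) * (T j - T (j - 1)%Z)).
    { intros j. specialize (Hode t It j). unfold c_half in Hode.
      unfold T. replace (j - 1 + 1)%Z with j in * by lia.
      assert (E : dc t j = - (u * (c t j + / 2 * (c t (j + 1)%Z - c t j) * ph t j -
          (c t (j - 1)%Z + / 2 * (c t j - c t (j - 1)%Z) * ph t (j - 1)%Z)) / dx)) by lra.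
      rewrite E. field. lra. }
    exists (-(2 * dx / u) * Scd + (-2) * 0).
    assert (HD : sum_Z (fun j => (c t j - c t (j - 1)%Z) ^ 2 * (1 - ph t (j - 1)%Z))
                   (-(2 * dx / u) * Scd + (-2) * 0)).
    { apply (sZ_ext _ _ _ (fun j => eq_sym (Hpt j))).
      apply sZ_plus; apply sZ_scal; auto. apply sZ_tele; auto. }
    split; [exact HD|split].
    2:{ assert (0 <= -(2 * dx / u) * Scd + (-2) * 0); [|nra].
        apply (sZ_nonneg _ _) in HD; auto. intros j. specialize (Hphb (j - 1)%Z).
        apply Rmult_le_pos; [apply pow2_ge_0|lra]. }
    intros eps Heps.
    set (k := (2 * eps / dx) / (4 * (Et + 1))).
    assert (HEt0 : 0 <= Et) by (apply (sZ_nonneg _ _ (fun j => pow2_ge_0 _) HEt)).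
    assert (HSd0 : 0 <= Sd) by (apply (sZ_nonneg _ _ (fun j => pow2_ge_0 _) HSd)).
    assert (He2 : 0 < 2 * eps / dx) by (apply Rdiv_lt_0_compat; lra).
    assert (Hkp : 0 < k) by (apply Rdiv_lt_0_compat; lra).
    set (eps1 := Rmin 1 ((2 * eps / dx) * k / 4)).
    assert (He1 : 0 < eps1) by (apply Rmin_glb_lt; [lra|]; apply Rdiv_lt_0_compat; nra).
    destruct (Hfr t It eps1 He1) as [d0 [Hd0 Hd0']].
    assert (Hd1 : 0 < (2 * eps / dx) / (4 * (Sd + 1))) by (apply Rdiv_lt_0_compat; lra).
    exists (Rmin d0 ((2 * eps / dx) / (4 * (Sd + 1)))). split.
    { apply Rmin_glb_lt; auto. }
    intros s Is Hne Hlt Es Et' HEs HEt'.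
    rewrite <- (sZ_uniq _ _ _ HEt HEt').
    destruct (Hd0' s Is Hne (Rlt_le_trans _ _ _ Hlt (Rmin_l _ _))) as [Se [HSe HSelt]].
    assert (HSe0 : 0 <= Se) by (apply (sZ_nonneg _ _ (fun j => pow2_ge_0 _) HSe)).
    assert (Hh : s - t <> 0) by lra.
    set (e := fun j => (c s j - c t j) / (s - t) - dc t j).
    change (sum_Z (fun j => e j ^ 2) Se) in HSe.
    destruct (sZ_cmp (fun j => c t j * e j) (fun j => / 2 * (c t j ^ 2 + e j ^ 2))
       (/2 * (Et + Se)) (fun j => ab_le _ _) (sZ_scal _ _ _ (sZ_plus _ _ _ _ HEt HSe)))
      as [Sce HSce].
    assert (HS2 := sZ_plus _ _ _ _ (sZ_scal 2 _ _ HSd) (sZ_scal 2 _ _ HSe)).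
    destruct (sZ_cmp (fun j => (dc t j + e j) ^ 2) (fun j => 2 * dc t j ^ 2 + 2 * e j ^ 2) _
       (fun j => ltac:(rewrite Rabs_right by apply Rle_ge, pow2_ge_0;
                       pose proof (pow2_ge_0 (dc t j - e j)); nra)) HS2) as [Sq HSq].
    assert (HEs2 : sum_Z (fun j => c s j ^ 2)
        (Et + (s - t) * 2 * Scd + (s - t) * 2 * Sce + (s - t) ^ 2 * Sq)).
    { refine (sZ_ext _ _ _ _ (sZ_plus _ _ _ _ (sZ_plus _ _ _ _ (sZ_plus _ _ _ _ HEt
          (sZ_scal ((s - t) * 2) _ _ HScd)) (sZ_scal ((s - t) * 2) _ _ HSce))
          (sZ_scal ((s - t) ^ 2) _ _ HSq))).
      intros j. unfold e. field. auto. }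
    rewrite (sZ_uniq _ _ _ HEs HEs2).
    assert (B1 : Sce <= / 2 * (k * Et + Se / k)).
    { apply (sZ_le (fun j => c t j * e j) (fun j => / 2 * (k * c t j ^ 2 + / k * e j ^ 2)) _ _
        (fun j => ltac:(destruct (ab_le_k k (c t j) (e j) Hkp); unfold Rdiv in *;
           rewrite (Rmult_comm (e j ^ 2)) in *; lra)) HSce).
      replace (/ 2 * (k * Et + Se / k)) with (/ 2 * (k * Et + / k * Se)) by (field; lra).
      apply sZ_scal, sZ_plus; apply sZ_scal; auto. }
    assert (B2 : -1 * Sce <= / 2 * (k * Et + Se / k)).
    { apply (sZ_le (fun j => -1 * (c t j * e j)) (fun j => / 2 * (k * c t j ^ 2 + / k * e j ^ 2)) _ _
        (fun j => ltac:(destruct (ab_le_k k (c t j) (e j) Hkp); unfold Rdiv in *;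
           rewrite (Rmult_comm (e j ^ 2)) in *; lra)) (sZ_scal (-1) _ _ HSce)).
      replace (/ 2 * (k * Et + Se / k)) with (/ 2 * (k * Et + / k * Se)) by (field; lra).
      apply sZ_scal, sZ_plus; apply sZ_scal; auto. }
    assert (B3 : 0 <= Sq) by (apply (sZ_nonneg _ _ (fun j => pow2_ge_0 _) HSq)).
    assert (B4 : Sq <= 2 * Sd + 2 * Se).
    { apply (sZ_le (fun j => (dc t j + e j) ^ 2) (fun j => 2 * dc t j ^ 2 + 2 * e j ^ 2) _ _ (fun j => ltac:(cbv beta; pose proof (pow2_ge_0 (dc t j - e j)); nra)) HSq HS2). }
    replace (dx / 2 * ((Et + (s - t) * 2 * Scd + (s - t) * 2 * Sce + (s - t) ^ 2 * Sq - Et)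
        / (s - t)) - - (u / 2) * (- (2 * dx / u) * Scd + -2 * 0))
      with (dx * Sce + dx / 2 * (s - t) * Sq) by (field; lra).
    apply (final_arith dx eps Et Sd Se Sce Sq (s - t) k eps1
       (Rmin d0 (2 * eps / dx / (4 * (Sd + 1))))); auto.
    + apply Rmin_r.
    + apply Rabs_le; lra. }
  split; auto.
  intros s t Is It Hst Es Et HEs HEt.
  apply (mono_rel I (fun x e => sum_Z (fun j => c x j ^ 2) e) HI) with (a := s) (b := t); auto.
  - intros x Ix. destruct (Hl2 x Ix) as [H _]. exact H.
  - intros x e1 e2; apply sZ_uniq.
  - intros t0 It0 eps Heps. destruct (P1 t0 It0) as [D [_ [Hd HD]]].
    destruct (Hd (dx / 2 * eps) ltac:(nra)) as [delta [Hdel Hdd]].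
    exists delta; split; auto. intros s0 Is0 Hne Hlt Es0 Et0 H1 H2.
    specialize (Hdd s0 Is0 Hne Hlt Es0 Et0 H1 H2).
    apply Rabs_def2 in Hdd. destruct Hdd as [Hdd _].
    assert (dx / 2 * ((Es0 - Et0) / (s0 - t0)) < dx / 2 * eps) by lra.
    apply Rmult_lt_reg_l in H; lra.
Qed.
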